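(* Let $K=\mathbb{Q}(\beta)$ be a totally real number field of degree $4$ with $\beta\in\mathcal{O}_K$. Then $\operatorname{disc} K\le \frac{2^{12}}{5^5}\,\lceil\!\overline{\beta}\!\rceil^{12}$, where $\lceil\!\overline{\beta}\!\rceil$ denotes the house of $\beta$.
   Context: $\mathcal{O}_K$ is the ring of integers of $K$. The house of $\beta\in K$ is $\max_i|\sigma_i(\beta)|$, the maximum over the real embeddings $\sigma_i:K\hookrightarrow\mathbb{R}$. $\operatorname{disc}K$ is the discriminant of $K$. *)

(* Defs.v *)
From mathcomp Require Import all_boot all_order all_algebra all_field.
Set Implicit Arguments. Unset Strict Implicit. Unset Printing Implicit Defensive.
Import Order.TTheory GRing.Theory Num.Theory.
Local Open Scope ring_scope.

(* Number fields are modelled as subfields of algC (algebraic closure of Q). *)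

Definition in_Qadj (beta x : algC) : Prop :=
  exists q : {poly rat}, x = (map_poly (ratr : rat -> algC) q).[beta].

Definition in_OK (beta x : algC) : Prop := in_Qadj beta x /\ x \in Aint.

Definition integral_basis (n : nat) (beta : algC) (w : 'I_n -> algC) : Prop :=
  [/\ forall j, in_OK beta (w j),
      forall x, in_OK beta x -> exists c : 'I_n -> int, x = \sum_j (c j)%:~R * w j
    & forall c : 'I_n -> int, \sum_j (c j)%:~R * w j = 0 -> forall j, c j = 0].

Definition field_degree (beta : algC) : nat := (size (minCpoly beta)).-1.

Definition totally_real (beta : algC) : Prop :=
  forall z, root (minCpoly beta) z -> z \is Num.real.

(* A complete system of the n embeddings of K = Q(beta) into algC:
   the restrictions of n automorphisms of algC that send beta to pairwise
   distinct conjugates (every embedding of K extends to such an automorphism,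
   and an embedding of Q(beta) is determined by the image of beta). *)
Definition embeddings_system (n : nat) (beta : algC)
    (s : 'I_n -> {rmorphism algC -> algC}) : Prop :=
  injective (fun i => s i beta).

Definition house (n : nat) (beta : algC) (s : 'I_n -> {rmorphism algC -> algC}) : algC :=
  \big[Num.max/0]_(i < n) `|s i beta|.

Definition disc_basis (n : nat) (s : 'I_n -> {rmorphism algC -> algC})
    (w : 'I_n -> algC) : algC :=
  (\det (\matrix_(i < n, j < n) s i (w j))) ^+ 2.

(* Main.v *)
Require Import Defs.
From mathcomp Require Import all_boot all_order all_algebra all_field.
From mathcomp Require Import ring lra zify.
Set Implicit Arguments. Unset Strict Implicit.
Import Order.TTheory GRing.Theory Num.Theory.
Local Open Scope ring_scope.

Section R.
Variable R : realFieldType.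

Lemma step_c (s E : R) : 0 <= s -> s <= E -> 3125 * s * (E - s)^+4 <= 256 * E^+5.
Proof.
move=> s0 sE.
have -> : 256 * E^+5 = 3125 * s * (E - s)^+4 + (5*s - E)^+2 *
   (16*E^+3 + 40*E^+2*(E-s) + 75*E*(E-s)^+2 + 125*(E-s)^+3) by ring.
rewrite lerDl; apply: mulr_ge0; first exact: sqr_ge0.
have t0 : 0 <= E - s by rewrite subr_ge0.
have E0 : 0 <= E by apply: le_trans sE.
by rewrite !addr_ge0 ?mulr_ge0 ?exprn_ge0.
Qed.

Lemma step_a (p q r : R) : 0 <= p -> 0 <= q -> 0 <= r ->
  16 * (p*(q+r)*(r*(p+q))) <= (p+r)^+2 * (p+r+2*q)^+2.
Proof.
move=> p0 q0 r0.
have -> : (p+r)^+2 * (p+r+2*q)^+2 = 16 * (p*(q+r)*(r*(p+q))) +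
   ((p-r)^+2) * (4 * q^+2 + 4* q*(p+r) + 4 * p*r + (p+r)^+2) by ring.
rewrite lerDl; apply: mulr_ge0; first exact: sqr_ge0.
by rewrite !addr_ge0 ?mulr_ge0 ?sqr_ge0 ?addr_ge0.
Qed.

Lemma stepQ (p q r : R) : 0 <= p -> 0 <= q -> 0 <= r ->
  3125 * (p*q*r*(p+q)*(q+r)*(p+q+r))^+2 <= (p+q+r)^+12.
Proof.
move=> p0 q0 r0.
set D := p+q+r.
have D0 : 0 <= D by rewrite /D !addr_ge0.
set X := p*(q+r)*(r*(p+q)).
have X0 : 0 <= X by rewrite /X !mulr_ge0 ?addr_ge0.
have hX : 16 * X <= (p+r)^+2 * (p+r+2*q)^+2 := step_a p0 q0 r0.
have -> : p*q*r*(p+q)*(q+r)*D = (q*D) * X by rewrite /X; ring.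
have qD0 : 0 <= q * D by rewrite mulr_ge0.
have h1 : (q*D) * (16 * X) <= (q*D) * ((p+r)^+2 * (p+r+2*q)^+2).
  exact: ler_wpM2l.
have h2 : ((q*D) * (16 * X))^+2 <= ((q*D) * ((p+r)^+2 * (p+r+2*q)^+2))^+2.
  have hX16 : 0 <= 16 * X by rewrite mulr_ge0.
  rewrite ler_sqr ?nnegrE //; [exact: mulr_ge0|].
  by rewrite mulr_ge0 // (le_trans hX16 hX).
have hs : q^+2 <= D^+2 by rewrite ler_sqr ?nnegrE // /D; lra.
have h3 := step_c (sqr_ge0 q) hs.
have e1 : ((q * D) * ((p + r) ^+ 2 * (p + r + 2 * q) ^+ 2)) =
   q * D * (D^+2 - q^+2)^+2 by rewrite /D; ring.
rewrite e1 in h2.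
have E0 : 0 <= D^+2 by rewrite sqr_ge0.
have h4 := ler_wpM2l E0 h3.
have h5 : 256 * (3125 * ((q*D) * X)^+2) <= 256 * D^+12.
  have -> : 256 * (3125 * ((q*D) * X)^+2) = 3125 * ((q*D) * (16 * X))^+2 by ring.
  apply: le_trans (ler_wpM2l _ h2) _ => //.
  have -> : 3125 * (q * D * (D ^+ 2 - q ^+ 2) ^+ 2) ^+ 2 = D ^+ 2 * (3125 * q ^+ 2 * (D ^+ 2 - q ^+ 2) ^+ 4) by ring.
  apply: (le_trans h4).
  by have -> : D^+2 * (256 * D^+2^+5) = 256 * D^+12 by ring.
by rewrite ler_pM2l in h5.
Qed.
End R.

Definition G (R : comRingType) (a b c d : R) := (b-a)*(c-a)*(d-a)*(c-b)*(d-b)*(d-c).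

Section R.
Variable R : realFieldType.
Variable h : R.
Definition Qp (a b c d : R) := `|a| <= h -> `|b| <= h -> `|c| <= h -> `|d| <= h ->
  G a b c d ^+ 2 <= (2%:R ^+ 12 / 5%:R ^+ 5) * h ^+ 12.

Lemma sorted_ok a b c d : a <= b -> b <= c -> c <= d -> Qp a b c d.
Proof.
move=> ab bc cd ha hb hc hd.
have p0 : 0 <= b - a by rewrite subr_ge0.
have q0 : 0 <= c - b by rewrite subr_ge0.
have r0 : 0 <= d - c by rewrite subr_ge0.
have := stepQ p0 q0 r0.
have -> : (b - a) * (c - b) * (d - c) * (b - a + (c - b)) * (c - b + (d - c)) *
      (b - a + (c - b) + (d - c)) = G a b c d by rewrite /G; ring.
have -> : b - a + (c - b) + (d - c) = d - a by ring.
move=> H.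
have D0 : 0 <= d - a by lra.
have D2 : d - a <= 2 * h.
  move: ha hd; rewrite !ler_norml; lra.
have H2 : (d - a) ^+ 12 <= (2 * h) ^+ 12 by rewrite lerXn2r ?nnegrE //; lra.
have H3 : 3125 * G a b c d ^+ 2 <= 4096 * h ^+ 12.
  apply: le_trans H (le_trans H2 _).
  by have -> : (2 * h) ^+ 12 = 4096 * h ^+ 12 by ring.
have -> : (2%:R ^+ 12 / 5%:R ^+ 5) * h ^+ 12 = (4096 * h ^+ 12) / 3125.
  by rewrite mulrC mulrA; congr (_ / _); ring.
by rewrite ler_pdivlMr // mulrC.
Qed.

Lemma ins3 a b c d : b <= c -> c <= d -> Qp a b c d.
Proof.
move=> bc cd ha hb hc hd.
case: (lerP a b) => ab; first exact: sorted_ok.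
case: (lerP a c) => ac.
  have := sorted_ok (ltW ab) ac cd hb ha hc hd.
  by have -> : G b a c d ^+ 2 = G a b c d ^+ 2 by rewrite /G; ring.
case: (lerP a d) => ad.
  have := sorted_ok bc (ltW ac) ad hb hc ha hd.
  by have -> : G b c a d ^+ 2 = G a b c d ^+ 2 by rewrite /G; ring.
have := sorted_ok bc cd (ltW ad) hb hc hd ha.
by have -> : G b c d a ^+ 2 = G a b c d ^+ 2 by rewrite /G; ring.
Qed.

Lemma ins2 a b c d : c <= d -> Qp a b c d.
Proof.
move=> cd ha hb hc hd.
case: (lerP b c) => bc; first exact: ins3.
case: (lerP b d) => bd.
  have := ins3 (ltW bc) bd ha hc hb hd.
  by have -> : G a c b d ^+ 2 = G a b c d ^+ 2 by rewrite /G; ring.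
have := ins3 cd (ltW bd) ha hc hd hb.
by have -> : G a c d b ^+ 2 = G a b c d ^+ 2 by rewrite /G; ring.
Qed.

Lemma allQ a b c d : Qp a b c d.
Proof.
move=> ha hb hc hd.
case: (lerP c d) => cd; first exact: ins2.
have := ins2 (ltW cd) ha hb hd hc.
by have -> : G a b d c ^+ 2 = G a b c d ^+ 2 by rewrite /G; ring.
Qed.
End R.
Definition o0 : 'I_4 := ord0.
Definition o1 : 'I_4 := lift ord0 ord0.
Definition o2 : 'I_4 := lift ord0 (lift ord0 ord0).
Definition o3 : 'I_4 := lift ord0 (lift ord0 (lift ord0 ord0)).
Lemma vexp (R : comRingType) (a : 'I_4 -> R) :
  \prod_(i < 4) \prod_(j < 4 | (i < j)%N) (a j - a i) =
  (a o1 - a o0) * (a o2 - a o0) * (a o3 - a o0) *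
  (a o2 - a o1) * (a o3 - a o1) * (a o3 - a o2).
Proof.
under eq_bigr => i _ do rewrite big_mkcond.
rewrite !big_ord_recl !big_ord0 /=.
rewrite /o0 /o1 /o2 /o3; ring.
Qed.

Lemma breal (beta : algC) (f : {rmorphism algC -> algC}) :
  totally_real beta -> f beta \is Creal.
Proof.
move=> tr; apply: tr.
have [p [Dp _] _] := minCpolyP beta.
have := root_minCpoly beta; rewrite Dp /root => /eqP H.
apply/eqP; rewrite -(rmorph0 f) -H -horner_map /= -map_poly_comp.
by congr (_.[_]); apply: eq_map_poly => q /=; rewrite fmorph_rat.
Qed.

Lemma betaOK (beta : algC) k : beta \in Aint -> in_OK beta (beta ^+ k).
Proof.
move=> hb; split; last exact: rpredX.
by exists 'X^k; rewrite map_polyXn hornerXn.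
Qed.

Lemma valmax (x y : algR) : algRval (Order.max x y) = Order.max (algRval x) (algRval y).
Proof. rewrite /Order.max /=. have -> : (algRval x < algRval y) = (x < y) by []. by case: ifP. Qed.
Unset Implicit Arguments.

Theorem proposition2p9 (beta : algC)
  (s : 'I_4 -> {rmorphism algC -> algC}) (w : 'I_4 -> algC) :
  beta \in Aint ->
  field_degree beta = 4%N ->
  totally_real beta ->
  embeddings_system beta s ->
  integral_basis beta w ->
  disc_basis s w <= (2%:R ^+ 12 / 5%:R ^+ 5) * house beta s ^+ 12.
Proof.
move=> hb _ tr emb [_ hw _].
pose x i := s i beta.
have xR : forall i, x i \is Creal := fun i => @breal beta (s i) tr.
have : forall k : 'I_4, exists c : 'I_4 -> int, beta ^+ k = \sum_j (c j)%:~R * w j.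
  by move=> k; apply: hw; apply: betaOK.
case/fin_all_exists => c hc.
pose Mi : 'M[int]_4 := \matrix_(j, k) c k j.
pose W : 'M[algC]_4 := \matrix_(i, j) s i (w j).
pose V : 'M[algC]_4 := \matrix_(i, k) x i ^+ k.
have VWC : V = W *m map_mx intr Mi.
  apply/matrixP => i k; rewrite !mxE.
  rewrite /x -rmorphXn hc rmorph_sum; apply: eq_bigr => j _.
  by rewrite !mxE rmorphM rmorph_int mulrC.
have dV : \det V = \det W * (\det Mi)%:~R by rewrite VWC det_mulmx det_map_mx.
have GV : \det V = G (x o0) (x o1) (x o2) (x o3).
  have -> : V = (Vandermonde 4 (\row_i x i))^T by apply/matrixP => i k; rewrite !mxE.
  rewrite det_tr det_Vandermonde.
  under eq_bigr => i _ do under eq_bigr => j _ do rewrite !mxE.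
  by rewrite vexp /G.
have xne : forall i j : 'I_4, i != j -> x j - x i != 0.
  move=> i j; apply: contraNN; rewrite subr_eq0 => /eqP e.
  by apply/eqP; apply: emb; rewrite /= -/(x i) -/(x j) e.
have G0 : G (x o0) (x o1) (x o2) (x o3) != 0.
  by rewrite /G !mulf_neq0 // xne.
have m0 : (\det Mi) != 0.
  apply: contraNneq G0 => e; by rewrite -GV dV e mulr0.
have m2 : 1 <= ((\det Mi)%:~R : algC) ^+ 2.
  rewrite -rmorphXn /= ler1z.
  move: m0; set z := \det Mi => m0. 
  rewrite expr2; nia.
pose xr i : algR := in_algR (xR i).
pose hr : algR := \big[Order.max/0]_i `|xr i|.
have Hr := @allQ _ hr (xr o0) (xr o1) (xr o2) (xr o3)
  (le_bigmax _ _ _) (le_bigmax _ _ _) (le_bigmax _ _ _) (le_bigmax _ _ _).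
have e1 : algRval (G (xr o0) (xr o1) (xr o2) (xr o3)) = G (x o0) (x o1) (x o2) (x o3).
  by rewrite /G !rmorphM !rmorphB.
have e2 : algRval hr = house beta s.
  rewrite /house /hr (big_morph algRval valmax (rmorph0 algRval)).
  by apply: eq_bigr.
have Hg : G (x o0) (x o1) (x o2) (x o3) ^+ 2 <= (2%:R ^+ 12 / 5%:R ^+ 5) * house beta s ^+ 12.
  move: Hr; rewrite -e1 -e2.
  have -> : (2%:R ^+ 12 / 5%:R ^+ 5) * algRval hr ^+ 12 =
     algRval ((2%:R ^+ 12 / 5%:R ^+ 5) * hr ^+ 12).
    by rewrite !rmorphM fmorphV !rmorphXn !rmorph_nat.
  by rewrite -rmorphXn.
have g2 : 0 <= G (x o0) (x o1) (x o2) (x o3) ^+ 2.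
  rewrite -e1 -rmorphXn.
  have : (0 : algR) <= G (xr o0) (xr o1) (xr o2) (xr o3) ^+ 2 by apply: sqr_ge0.
  by [].
have m2p : 0 < ((\det Mi)%:~R : algC) ^+ 2 by apply: lt_le_trans m2.
have eW : disc_basis s w = G (x o0) (x o1) (x o2) (x o3) ^+ 2 / ((\det Mi)%:~R : algC) ^+ 2.
  by rewrite -GV dV exprMn mulfK // gt_eqF.
rewrite eW ler_pdivrMr //.
apply: (le_trans Hg); apply: ler_peMr => //.
exact: le_trans g2 Hg.
Qed.
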